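(* Let $K$ satisfy $m:=\binom K2\ge8$, and let $\Omega=\{0,1\}^{\binom{[K]}{2}}$ (vectors indexed by 2-element subsets of $[K]$) with Hamming distance $d_H$. For a permutation $\sigma$ of $[K]$ and $\omega\in\Omega$ define $T_\sigma(\omega)\in\Omega$ by $T_\sigma(\omega)_{\{k,k'\}}=\omega_{\{\sigma(k),\sigma(k')\}}$. Then there exists $\Omega''\subseteq\Omega$ such that $\mathbf 0\in\Omega''$, for all distinct $\omega_1,\omega_2\in\Omega''$ $$\min_{\sigma}d_H(T_\sigma(\omega_1),\omega_2)\ge\frac{1}{17}\binom K2,$$ the minimum being over all permutations of $[K]$, and $|\Omega''|\ge1+2^{\frac18\binom K2}/K!$.
   Context: $d_H(\omega,\omega')$ is the number of coordinates in which $\omega$ and $\omega'$ differ. (For the matrix $\mathtt B(\omega)$ with $\mathtt B_{kk}=1/2$, $\mathtt B_{kk'}=1/4+\omega_{\{k,k'\}}\mu/n$, the map $T_\sigma$ corresponds to conjugation $\mathtt B(\omega)\mapsto\Pi\mathtt B(\omega)\Pi^{\mathrm T}$ by a permutation matrix.) *)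

(* Defs.v *)
From HB Require Import structures.
From mathcomp Require Import all_boot all_order all_algebra all_fingroup.
Set Implicit Arguments. Unset Strict Implicit. Unset Printing Implicit Defensive.

Definition pair2 (K : nat) := {A : {set 'I_K} | #|A| == 2}.
HB.instance Definition _ K := [Finite of pair2 K by <:].

Definition Omega (K : nat) := {ffun pair2 K -> bool}.

Lemma card_imset_perm2 K (s : {perm 'I_K}) (p : pair2 K) :
  #|s @: val p| == 2.
Proof. by rewrite card_imset; [exact: (valP p) | exact: perm_inj]. Qed.

Definition pair_img K (s : {perm 'I_K}) (p : pair2 K) : pair2 K :=
  exist _ (s @: val p) (card_imset_perm2 s p).

Definition Tperm K (s : {perm 'I_K}) (w : Omega K) : Omega K :=
  [ffun p => w (pair_img s p)].

Definition dH K (w w' : Omega K) : nat := #|[set p | w p != w' p]|.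

Definition zeroOmega K : Omega K := [ffun _ => false].

(* Main.v *)
Require Import Defs.
From HB Require Import structures.
From mathcomp Require Import all_boot all_order all_algebra all_fingroup.
From mathcomp Require Import all_classical all_reals all_analysis.
From mathcomp Require Import zify ring lra.
Import Order.TTheory GRing.Theory Num.Theory.
Set Implicit Arguments. Unset Strict Implicit. Unset Printing Implicit Defensive.

Lemma card_pair2 K : #|{: pair2 K}| = 'C(K, 2).
Proof.
have := card_draws 'I_K 2; rewrite card_ord => <-.
rewrite -(card_imset _ val_inj); apply: eq_card => A.
rewrite inE; apply/imsetP/idP.
  by case=> p _ ->; exact: (valP p).
by move=> h; exists (exist _ A h).
Qed.

Lemma dH_sym K (a b : Omega K) : dH a b = dH b a.
Proof. by rewrite /dH; apply: eq_card => p; rewrite !inE eq_sym. Qed.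

Lemma pair_img_inj K (s : {perm 'I_K}) : injective (pair_img s).
Proof.
move=> p q /(congr1 val) /= h; apply: val_inj; exact: (imset_inj (@perm_inj _ s) h).
Qed.

Lemma Tperm_inj K (s : {perm 'I_K}) : injective (Tperm s).
Proof.
move=> a b h; apply/ffunP => q.
have [g _ gK] := injF_bij (@pair_img_inj K s).
by have := congr1 (fun f : Omega K => f (g q)) h; rewrite /= !ffunE gK.
Qed.

Definition ball K (w : Omega K) := [set x : Omega K | 17 * dH x w < #|{: pair2 K}|].

Lemma ball_card K (w : Omega K) :
  4 ^ (#|{: pair2 K}| - (#|{: pair2 K}|).-1 %/ 17) * #|ball w| <= 5 ^ #|{: pair2 K}|.
Proof.
set m := #|{: pair2 K}|; set r := m.-1 %/ 17.
have E x : 4 ^ (m - dH x w) = \prod_(p : pair2 K) (if x p == w p then 4 else 1).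
  rewrite -big_mkcond /= prod_nat_const; congr (4 ^ _).
  have -> : dH x w = #|~: [set p | x p == w p]|.
    by rewrite /dH; apply: eq_card => p; rewrite !inE.
  have := cardsC [set p | x p == w p]; rewrite -/m => <-.
  by rewrite addnK; apply: eq_card => p; rewrite inE.
have S : \sum_(x : Omega K) 4 ^ (m - dH x w) = 5 ^ m.
  rewrite (eq_bigr _ (fun x _ => E x)).
  rewrite -(bigA_distr_bigA (fun (p : pair2 K) (b : bool) => if b == w p then 4 else 1)).
  rewrite (eq_bigr (fun _ => 5)); first by rewrite prod_nat_const.
  by move=> p _; rewrite big_bool /=; case: (w p).
rewrite -S -sum1_card big_distrr /=.
rewrite [leqRHS](bigID (fun x => x \in ball w)) /=; apply: leq_trans (leq_addr _ _).
apply: leq_sum => x; rewrite inE => hx; rewrite muln1 leq_pexp2l //.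
lia.
Qed.

Lemma card_bigcup_le (I T : finType) (P : pred I) (F : I -> {set T}) :
  #|\bigcup_(i | P i) F i| <= \sum_(i | P i) #|F i|.
Proof.
apply: (big_ind2 (fun (U : {set T}) n => #|U| <= n)); first by rewrite cards0.
  move=> U1 n1 U2 n2 h1 h2; apply: leq_trans (leq_card_setU U1 U2) _.
  exact: leq_add.
by [].
Qed.

Lemma B2_card K (s : {perm 'I_K}) (w : Omega K) :
  #|[set x | 17 * dH (Tperm s x) w < #|{: pair2 K}|]| <= #|ball w|.
Proof.
rewrite -(card_imset _ (@Tperm_inj K s)); apply: subset_leq_card.
by apply/fintype.subsetP => y /imsetP [x]; rewrite !inE => h ->.
Qed.

Lemma B1_card K (s : {perm 'I_K}) (w : Omega K) :
  #|[set x | 17 * dH (Tperm s w) x < #|{: pair2 K}|]| = #|ball (Tperm s w)|.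
Proof. by apply: eq_card => x; rewrite !inE dH_sym. Qed.

Definition valid K (O : {set Omega K}) : bool :=
  (zeroOmega K \in O) && [forall w1, forall w2, forall s : {perm 'I_K},
    ((w1 \in O) && (w2 \in O) && (w1 != w2)) ==>
      (#|{: pair2 K}| <= 17 * dH (Tperm s w1) w2)].

Definition oneOmega K : Omega K := [ffun _ => true].

Lemma Tperm_zero K s : Tperm s (zeroOmega K) = zeroOmega K.
Proof. by apply/ffunP => p; rewrite !ffunE. Qed.
Lemma Tperm_one K s : Tperm s (oneOmega K) = oneOmega K.
Proof. by apply/ffunP => p; rewrite !ffunE. Qed.
Lemma dH_zero_one K : dH (zeroOmega K) (oneOmega K) = #|{: pair2 K}|.
Proof. by apply: eq_card => p; rewrite !inE !ffunE. Qed.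

Lemma valid0 K : 0 < #|{: pair2 K}| -> valid [set zeroOmega K; oneOmega K].
Proof.
move=> hm; rewrite /valid !inE eqxx /=; apply/forallP => w1; apply/forallP => w2.
apply/forallP => s; apply/implyP => /andP [/andP [h1 h2] hne].
rewrite !inE in h1 h2.
case/orP: h1 => /eqP E1; case/orP: h2 => /eqP E2; subst w1 w2;
  first [by rewrite eqxx in hne |
   rewrite ?Tperm_zero ?Tperm_one ?dH_zero_one 1?dH_sym ?dH_zero_one; lia].
Qed.

Lemma zero_one K : 0 < #|{: pair2 K}| -> zeroOmega K != oneOmega K.
Proof.
case/card_gt0P => p _; apply/negP => /eqP /ffunP /(_ p); rewrite !ffunE.
by [].
Qed.

Lemma main_comb K : 0 < #|{: pair2 K}| ->
  exists Om : {set Omega K},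
    [/\ zeroOmega K \in Om,
     (forall w1 w2 s, w1 \in Om -> w2 \in Om -> w1 != w2 ->
        #|{: pair2 K}| <= 17 * dH (Tperm s w1) w2),
     2 <= #|Om| &
     4 ^ (#|{: pair2 K}| - (#|{: pair2 K}|).-1 %/ 17) * 2 ^ #|{: pair2 K}|
       <= 3 * (#|Om| * (K`! * 5 ^ #|{: pair2 K}|))].
Proof.
move=> hm; set m := #|{: pair2 K}|; set r := m.-1 %/ 17.
have v0 := valid0 hm.
case: (arg_maxnP (fun O : {set Omega K} => #|O|) v0) => Om vOm maxOm.
have := vOm; rewrite /valid => /andP [z0 /forallP hv].
have hOm w1 w2 s : w1 \in Om -> w2 \in Om -> w1 != w2 -> m <= 17 * dH (Tperm s w1) w2.
  move=> h1 h2 hne; move/forallP: (hv w1) => /(_ w2) /forallP /(_ s).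
  by rewrite h1 h2 hne.
exists Om; split => //.
  have := maxOm _ v0; rewrite cards2 zero_one //.
set C := Om :|: \bigcup_(w in Om) \bigcup_(s : {perm 'I_K})
   ([set x | 17 * dH (Tperm s w) x < m] :|: [set x | 17 * dH (Tperm s x) w < m]).
have cov x : x \in C.
  rewrite inE; case xO: (x \in Om) => //=.
  apply/negPn/negP => hx.
  have hw w s : w \in Om -> (m <= 17 * dH (Tperm s w) x) && (m <= 17 * dH (Tperm s x) w).
    move=> wO; apply/negPn/negP; rewrite negb_and -!ltnNge => h; apply: (negP hx).
    apply/bigcupP; exists w => //; apply/bigcupP; exists s => //.
    by rewrite !inE.
  have vx : valid (x |: Om).
    rewrite /valid !inE z0 orbT /=; apply/forallP => w1; apply/forallP => w2.
    apply/forallP => s; apply/implyP => /andP [/andP [h1 h2] hne].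
    rewrite !inE in h1 h2.
    case/orP: h1 => [/eqP E1|h1]; case/orP: h2 => [/eqP E2|h2].
    - by subst; rewrite eqxx in hne.
    - by subst; case/andP: (hw w2 s h2).
    - by subst; case/andP: (hw w1 s h1).
    - exact: hOm.
  have := maxOm _ vx; rewrite cardsU1 xO /=; lia.
have C2 : 2 ^ m <= #|C|.
  have -> : 2 ^ m = #|[set: Omega K]| by rewrite cardsT card_ffun card_bool.
  by apply: subset_leq_card; apply/fintype.subsetP => x _; exact: cov.
have h45 : 4 ^ (m - r) <= 5 ^ m.
  apply: leq_trans (leq_pexp2l _ (leq_subr r m)) _ => //.
  by rewrite leq_exp2r.
have BB (w : Omega K) (s : {perm 'I_K}) : 4 ^ (m - r) * #|[set x | 17 * dH (Tperm s w) x < m] :|: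
                               [set x | 17 * dH (Tperm s x) w < m]| <= 2 * 5 ^ m.
  apply: leq_trans (leq_mul (leqnn _) (leq_card_setU _ _)) _.
  rewrite mulnDr mul2n -addnn; apply: leq_add.
    by rewrite (B1_card s w); exact: ball_card.
  apply: leq_trans (ball_card w); rewrite leq_mul2l; apply/orP; right; exact: B2_card.
have HC : 4 ^ (m - r) * #|C| <= 4 ^ (m - r) * #|Om| +
     \sum_(w in Om) \sum_(s : {perm 'I_K}) 2 * 5 ^ m.
  apply: leq_trans (leq_mul (leqnn _) (leq_card_setU _ _)) _.
  rewrite mulnDr leq_add2l.
  apply: leq_trans (leq_mul (leqnn _) (card_bigcup_le _ _)) _.
  rewrite big_distrr /=; apply: leq_sum => w _.
  apply: leq_trans (leq_mul (leqnn _) (card_bigcup_le _ _)) _.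
  rewrite big_distrr /=; apply: leq_sum => s _; exact: BB.
have HS : \sum_(w in Om) \sum_(s : {perm 'I_K}) 2 * 5 ^ m = #|Om| * (K`! * (2 * 5 ^ m)).
  rewrite -sum_nat_const; apply: eq_bigr => w _; by rewrite sum_nat_const card_Sn.
rewrite HS in HC.
have F1 := fact_gt0 K.
apply: leq_trans (leq_mul (leqnn _) C2) _; apply: leq_trans HC _.
have : 4 ^ (m - r) * #|Om| <= 5 ^ m * #|Om| by rewrite leq_mul2r h45 orbT.
set a := 4 ^ (m - r) * #|Om|; set b := 5 ^ m; set N := #|Om|; set F := K`!.
move=> ha.
have : b * N <= N * (F * b) by rewrite mulnC leq_mul2l -{1}(mul1n b) leq_mul2r F1 !orbT.
nia.
Qed.

Lemma nat_ineq m : 8 <= m ->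
  6 ^ 24 * 5 ^ (24 * m) * 2 ^ (3 * m) <= (2 ^ m * 4 ^ (m - m.-1 %/ 17)) ^ 24.
Proof.
move=> hm.
have h6 : 6 ^ 24 <= 2 ^ (3 * 24).
  rewrite (expnM 2 3 24) (leq_exp2r 6 (2^3) (isT : 0 < 24)). exact: isT.
have h5 : 5 ^ (24 * m) <= 2 ^ (56 * m).
  rewrite (expnM 5 24 m) (expnM 2 56 m).
  have hp : 0 < m by lia.
  rewrite (leq_exp2r _ _ hp) (expnM 5 3 8) (expnM 2 7 8) (leq_exp2r (5^3) (2^7) (isT : 0 < 8)).
  exact: isT.
apply: leq_trans (leq_mul (leq_mul h6 h5) (leqnn _)) _.
rewrite -!expnD expnMn -expnM -expnM.
rewrite (_ : 4 = 2 ^ 2); last exact: erefl.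
rewrite -expnM -expnD.
apply: leq_pexp2l; first exact: isT.
lia.
Qed.

Local Open Scope ring_scope.

Theorem mainTheorem18 (R : realType) (K : nat) :
  (8 <= 'C(K, 2))%N ->
  exists Om : {set Omega K},
    zeroOmega K \in Om /\
    (forall w1 w2, w1 \in Om -> w2 \in Om -> w1 != w2 ->
       forall s : {perm 'I_K},
         ('C(K, 2)%:R / 17 : R) <= (dH (Tperm s w1) w2)%:R) /\
    (1 + (2 : R) `^ ('C(K, 2)%:R / 8) / (K`!)%:R <= (#|Om|)%:R).
Proof.
move=> hm.
have hm0 : (0 < #|{: pair2 K}|)%N by rewrite card_pair2; lia.
have [Om [z0 hOm N2 key]] := main_comb hm0.
rewrite card_pair2 in hOm key.
exists Om; split => //; split.
  move=> w1 w2 h1 h2 hne s; have := hOm w1 w2 s h1 h2 hne => h.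
  by rewrite ler_pdivrMr ?ltr0n // -natrM ler_nat mulnC.
set m := 'C(K, 2) in hm key *.
set r := (m.-1 %/ 17)%N in key.
set A : R := 2 `^ (m%:R / 8).
have A0 : 0 <= A by apply: powR_ge0.
have A8 : A ^+ 8 = 2 ^+ m.
  by rewrite -powR_mulrn // -powRrM divfK ?pnatr_eq0 // powR_mulrn.
have Hn := nat_ineq hm; rewrite -/r in Hn.
have E : (6 * 5 ^+ m * A) ^+ 24 <= (2 ^+ m * 4 ^+ (m - r)) ^+ 24 :> R.
  have -> : (6 * 5 ^+ m * A) ^+ 24 = ((6 ^ 24 * 5 ^ (24 * m) * 2 ^ (3 * m))%N)%:R :> R.
    rewrite !natrM !natrX !exprMn (mulnC 24 m) exprM (mulnC 3 m) exprM -A8 -!exprM.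
    done.
  have -> : (2 ^+ m * 4 ^+ (m - r)) ^+ 24 = (((2 ^ m * 4 ^ (m - r)) ^ 24)%N)%:R :> R.
    by rewrite natrX natrM !natrX.
  by rewrite ler_nat.
rewrite ler_pXn2r // ?nnegrE in E; last first.
  by rewrite mulr_ge0 // exprn_ge0.
  by rewrite mulr_ge0 // ?mulr_ge0 // exprn_ge0.
have key' : (4 ^+ (m - r) * 2 ^+ m : R) <= 3 * (#|Om|%:R * ((K`!)%:R * 5 ^+ m)).
  have := key; rewrite -(ler_nat R) !natrM !natrX => ->; done.
have c0 : (0 : R) < 5 ^+ m by rewrite exprn_gt0.
have hF : (0 : R) < (K`!)%:R by rewrite ltr0n fact_gt0.
have h2 : 2 * A <= #|Om|%:R * (K`!)%:R.
  rewrite -(ler_pM2l (_ : (0 : R) < 3 * 5 ^+ m)); last by rewrite mulr_gt0.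
  apply: le_trans (_ : 6 * 5 ^+ m * A <= _); first by rewrite le_eqVlt; apply/orP; left; apply/eqP; move: (5 ^+ m) => c; ring.
  apply: le_trans E _; rewrite mulrC; apply: le_trans key' _.
  by rewrite le_eqVlt; apply/orP; left; apply/eqP; move: (5 ^+ m) => c; ring.
have h2' : 2 * (A / (K`!)%:R) <= #|Om|%:R.
  by rewrite mulrA ler_pdivrMr.
have N2' : (2 : R) <= #|Om|%:R by rewrite (ler_nat R 2).
move: h2' N2'; move: (A / (K`!)%:R) (#|Om|%:R : R) => y N h1 h2''.
clear -h1 h2''.
lra.
Qed.
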